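(* Let $X$ be a compact Hausdorff space and $T\colon X\to X$ a continuous positively expansive map. Let $\hat Z=(\hat r,\hat s\colon\hat Y\to\hat X)$ be a topological graph with $\hat Y,\hat X$ compact Hausdorff, and let $\pi_{\hat Y}\colon\hat Y\to X$, $\pi_{\hat X}\colon\hat X\to X$ be continuous surjections with $T\circ\pi_{\hat Y}=\pi_{\hat X}\circ\hat r$ and $\pi_{\hat Y}=\pi_{\hat X}\circ\hat s$. If $\pi_{\hat Y}$ is locally injective, then the shift $\sigma\colon\hat Z^{-\infty}\to\hat Z^{-\infty}$ is positively expansive.
   Context: A topological graph $(\hat r,\hat s\colon\hat Y\to\hat X)$ consists of continuous maps (range, source). Its left infinite path space is $\hat Z^{-\infty}=\{(\dots,y_{-2},y_{-1})\in\prod_{i<0}\hat Y:\hat s(y_i)=\hat r(y_{i+1})\ \forall i<-1\}$ with the relative product topology, and the shift is $\sigma(\dots,y_{-3},y_{-2},y_{-1})=(\dots,y_{-3},y_{-2})$. A continuous map $S\colon W\to W$ on a compact Hausdorff space is positively expansive if there is a finite open cover $\{U_i\}_{i=1}^m$ of $W$ such that whenever $w,w'\in W$ satisfy: for every $n\ge0$ there is $i_n$ with $S^n(w),S^n(w')\in U_{i_n}$, then $w=w'$ (for metrizable $W$ this is equivalent to the usual metric definition). *)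

(* Defs.v *)
From HB Require Import structures.
From mathcomp Require Import all_boot all_order.
From mathcomp Require Import boolp classical_sets topology.
Set Implicit Arguments. Unset Strict Implicit. Unset Printing Implicit Defensive.
Local Open Scope classical_set_scope.

(* Positive expansiveness of S on an S-invariant subset W of a topological
   space T, W carrying the relative topology: there is a finite family of
   open subsets of T whose traces on W cover W (= a finite open cover of W in
   the relative topology) such that any two points of W whose forward orbits
   are always in a common member of the cover coincide. *)
Definition pos_expansive_on {T : topologicalType} (W : set T) (S : T -> T) : Prop :=
  exists (m : nat) (U : 'I_m -> set T),
    (forall i, open (U i)) /\
    W `<=` \bigcup_i U i /\
    (forall w w', W w -> W w' ->
       (forall n : nat, exists i, U i (iter n S w) /\ U i (iter n S w')) ->
       w = w').

Definition pos_expansive {T : topologicalType} (S : T -> T) : Prop :=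
  pos_expansive_on [set: T] S.

Definition locally_injective {T : topologicalType} {U : Type} (f : T -> U) : Prop :=
  forall y : T, exists V : set T, open V /\ V y /\
    (forall a b, V a -> V b -> f a = f b -> a = b).

(* A left infinite path (..., y_{-2}, y_{-1}) is encoded by z : nat -> Y with
   z n = y_{-(n+1)}; the condition s(y_i) = r(y_{i+1}) for i < -1 becomes
   s (z n.+1) = r (z n). *)
Definition left_path_space {X Y : Type} (r s : Y -> X) : set {ptws nat -> Y} :=
  [set z | forall n : nat, s (z n.+1) = r (z n)].

(* The shift sigma(..., y_{-3}, y_{-2}, y_{-1}) = (..., y_{-3}, y_{-2}),
   i.e. (sigma z) n = z n.+1 in our encoding. *)
Definition path_shift {Y : Type} (z : {ptws nat -> Y}) : {ptws nat -> Y} :=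
  fun n => z n.+1.

(* Main.v *)
Require Import Defs.
From HB Require Import structures.
From mathcomp Require Import all_boot all_order.
From mathcomp Require Import boolp classical_sets topology.
From mathcomp Require Import finmap.
Local Open Scope classical_set_scope.
Definition ptd {Y : topologicalType} (y0 : Y) : Type := Y.
HB.instance Definition _ (Y : topologicalType) (y0 : Y) := Topological.copy (ptd y0) Y.
HB.instance Definition _ (Y : topologicalType) (y0 : Y) := isPointed.Build (ptd y0) y0.
Lemma cc (Y : topologicalType) (y0 : Y) : compact [set: Y] -> cover_compact [set: ptd y0].
Proof. move=> c; rewrite -compact_cover; exact: c. Qed.
Lemma ev0_cont (Y : topologicalType) : continuous (fun z : {ptws nat -> Y} => z 0).
Proof. exact: (@proj_continuous nat (fun _ => Y) 0). Qed.

Lemma iter_shift (Y : Type) n (w : {ptws nat -> Y}) k :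
  iter n (@path_shift Y) w k = w (n + k)%N.
Proof.
elim: n k => [|n IH] k //=.
by rewrite /path_shift IH addnS.
Qed.

Theorem proposition4p16
  (X : topologicalType) (T : X -> X)
  (hX : hausdorff_space X) (cX : compact [set: X])
  (hTc : continuous T) (hTe : pos_expansive T)
  (Yh Xh : topologicalType) (r s : Yh -> Xh)
  (hYh : hausdorff_space Yh) (cYh : compact [set: Yh])
  (hXh : hausdorff_space Xh) (cXh : compact [set: Xh])
  (hr : continuous r) (hs : continuous s)
  (piY : Yh -> X) (piX : Xh -> X)
  (hpiYc : continuous piY) (hpiXc : continuous piX)
  (hpiYs : forall x : X, exists y : Yh, piY y = x)
  (hpiXs : forall x : X, exists x' : Xh, piX x' = x)
  (hcomm1 : forall y : Yh, T (piY y) = piX (r y))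
  (hcomm2 : forall y : Yh, piY y = piX (s y))
  (hloc : locally_injective piY) :
  pos_expansive_on (left_path_space r s) (@path_shift Yh).
Proof.
have [V HV] := choice hloc.
have [m [U [Uop [Ucov Uexp]]]] := hTe.
have [y0|Yempty] := pselect (exists y : Yh, True); last first.
  exists 0, (fun _ => set0); split; [by move=> ?; exact: open0|split].
  - by move=> z _; exfalso; apply: Yempty; exists (z 0).
  - by move=> w w2 _ _ _; exfalso; apply: Yempty; exists (w 0).
case: y0 => y0 _.
have := @cc Yh y0 cYh.
move=> /(_ _ [set: ptd y0] V) [].
  - by move=> y _; case: (HV y).
  - by move=> y _; exists y => //; case: (HV y) => _ [].
move=> D _ Dcov.
pose I := ('I_m * D)%type.
pose W (t : 'I_#|{: I}|) : set {ptws nat -> Yh} :=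
  (fun z : {ptws nat -> Yh} => z 0) @^-1`
     (piY @^-1` U (enum_val t).1 `&` V (val (enum_val t).2)).
exists #|{: I}|, W; split; [|split].
- move=> t; apply: open_comp; first by move=> z _; exact: ev0_cont.
  apply: openI; last by case: (HV (val (enum_val t).2)).
  by apply: open_comp => // y _; exact: hpiYc.
- move=> z _.
  have [i _ Ui] := Ucov (piY (z 0)) Logic.I.
  have [d Dd Vd] := Dcov (z 0) Logic.I.
  exists (enum_rank ((i, (FSetSub Dd)) : I)) => //.
  by rewrite /W /= enum_rankK.
- move=> w w' Pw Pw' H.
  have piw : forall z, left_path_space r s z -> forall n k,
      piY (z (n + k)%N) = iter k T (piY (z n)).
    move=> z Pz n; elim=> [|k IH]; first by rewrite addn0.
    by rewrite /= -IH hcomm1 -(Pz (n + k)%N) -hcomm2 addnS.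
  have key : forall n, piY (w n) = piY (w' n).
    move=> n; apply: Uexp => // k.
    have [t [Wt Wt']] := H (n + k)%N.
    exists (enum_val t).1.
    move: Wt Wt'; rewrite /W /= !iter_shift !addn0 => -[Uw _] [Uw' _].
    by rewrite -(piw w Pw) -(piw w' Pw').
  apply: funext => n.
  have [t [Wt Wt']] := H n.
  move: Wt Wt'; rewrite /W /= !iter_shift !addn0 => -[_ Vw] [_ Vw'].
  by case: (HV (val (enum_val t).2)) => _ [_ /(_ _ _ Vw Vw' (key n))].
Qed.
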